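(* In a finite-space SSP game (as in the context), let $\bar\nu\in\Pi_{2,SR}$ be a proper policy of player II. Then the mapping $F_{\bar\nu}$ is a contraction with respect to some weighted sup-norm $\|\cdot\|_\xi$: there exist a positive vector $\xi$ on $R$ and $\beta\in[0,1)$ such that $\|F_{\bar\nu}Q-F_{\bar\nu}Q'\|_\xi\le\beta\|Q-Q'\|_\xi$ for all $Q,Q'\in\mathbb{R}^R$.
   Context: Finite-space game: $S=\{1,\dots,n\}$, $S_o=S\cup\{0\}$, $0$ absorbing cost-free termination state. At $i\in S$ players I and II have finite control sets $U(i),V(i)$; under $(u,v)$ the state moves to $j\in S_o$ w.p. $p_{ij}(u,v)$, with expected one-stage cost $g(i,u,v)$. $\Pi_{1,SR},\Pi_{2,SR}$: stationary randomized policies $\mu=\{\mu(\cdot\mid i)\in\mathcal P(U(i))\}$, $\nu=\{\nu(\cdot\mid i)\in\mathcal P(V(i))\}$. A pair of policies is non-prolonging if the termination state is reached w.p.1 from every initial state. $\nu\in\Pi_{2,SR}$ is proper if $(\mu,\nu)$ is non-prolonging for every $\mu\in\Pi_{1,SR}$. $R=\{(i,u,v):i\in S,u\in U(i),v\in V(i)\}$. For $\bar\nu\in\Pi_{2,SR}$ write $\bar\nu_j=\bar\nu(\cdot\mid j)$ and define $F_{\bar\nu}:\mathbb{R}^R\to\mathbb{R}^R$ by $(F_{\bar\nu}Q)(i,u,v)=g(i,u,v)+\sum_{j\in S}p_{ij}(u,v)\min_{\tilde u\in U(j)}\sum_{\tilde v\in V(j)}\bar\nu_j(\tilde v)Q(j,\tilde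 u,\tilde v)$. For a positive vector $\xi$ on $R$, $\|Q\|_\xi=\max_{(i,u,v)\in R}|Q(i,u,v)|/\xi(i,u,v)$. *)

(* Defs.v *)
From mathcomp Require Import all_boot all_order all_algebra.
Set Implicit Arguments. Unset Strict Implicit. Unset Printing Implicit Defensive.
Import Order.TTheory GRing.Theory Num.Theory.
Local Open Scope ring_scope.

(* Model of the finite-space SSP game:
   - states S = 'I_n, the termination state 0 is represented by [None] in
     [option 'I_n] (so S_o = option 'I_n);
   - the control sets U(i), V(i) are the (nonempty) subsets [A i], [B i] of
     fixed finite types [U], [V];
   - [p i u v o] = p_{i o}(u,v), [g i u v] = g(i,u,v);
   - vectors on R = {(i,u,v) | u \in A i, v \in B i} are functions
     'I_n -> U -> V -> K (values outside R are irrelevant). *)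

Section Game.
Variables (K : realFieldType) (n : nat) (U V : finType).
Variables (A : 'I_n -> {set U}) (B : 'I_n -> {set V}).

Definition valid_game (p : 'I_n -> U -> V -> option 'I_n -> K) : Prop :=
  (forall i, A i != set0) /\ (forall i, B i != set0) /\
  (forall i u v, u \in A i -> v \in B i ->
     (forall o, 0 <= p i u v o) /\ \sum_(o : option 'I_n) p i u v o = 1).

Definition policy1 (mu : 'I_n -> U -> K) : Prop :=
  forall i, (forall u, 0 <= mu i u) /\ (forall u, u \notin A i -> mu i u = 0)
            /\ \sum_(u in A i) mu i u = 1.
Definition policy2 (nu : 'I_n -> V -> K) : Prop :=
  forall i, (forall v, 0 <= nu i v) /\ (forall v, v \notin B i -> nu i v = 0)
            /\ \sum_(v in B i) nu i v = 1.

Definition trans (p : 'I_n -> U -> V -> option 'I_n -> K)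
  (mu : 'I_n -> U -> K) (nu : 'I_n -> V -> K) (i j : 'I_n) : K :=
  \sum_(u in A i) \sum_(v in B i) mu i u * nu i v * p i u v (Some j).

(* Probability that the chain started at i has not reached the termination
   state 0 after k steps (0 is absorbing, so this is P(x_k <> 0 | x_0 = i)). *)
Fixpoint not_terminated (p : 'I_n -> U -> V -> option 'I_n -> K)
  (mu : 'I_n -> U -> K) (nu : 'I_n -> V -> K) (k : nat) (i : 'I_n) : K :=
  match k with
  | 0 => 1
  | k'.+1 => \sum_(j : 'I_n) trans p mu nu i j * not_terminated p mu nu k' j
  end.

Definition non_prolonging p mu nu : Prop :=
  forall i (eps : K), 0 < eps ->
    exists N : nat, forall k, (N <= k)%N -> not_terminated p mu nu k i < eps.

Definition proper2 p (nu : 'I_n -> V -> K) : Prop :=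
  forall mu, policy1 mu -> non_prolonging p mu nu.

(* Minimum of f over a finite set (meaningful when the set is nonempty). *)
Definition setmin (T : finType) (X : {set T}) (f : T -> K) : K :=
  match [pick x in X] with
  | Some x0 => \big[Num.min/f x0]_(x in X) f x
  | None => 0
  end.

Definition Fmap p (g : 'I_n -> U -> V -> K) (nu : 'I_n -> V -> K)
  (Q : 'I_n -> U -> V -> K) : 'I_n -> U -> V -> K :=
  fun i u v => g i u v + \sum_(j : 'I_n) p i u v (Some j) *
     setmin (A j) (fun ut => \sum_(vt in B j) nu j vt * Q j ut vt).

Definition positive_on_R (xi : 'I_n -> U -> V -> K) : Prop :=
  forall i u v, u \in A i -> v \in B i -> 0 < xi i u v.

Definition wnorm (xi Q : 'I_n -> U -> V -> K) : K :=
  \big[Num.max/0]_(i : 'I_n) \big[Num.max/0]_(u in A i)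
     \big[Num.max/0]_(v in B i) (`|Q i u v| / xi i u v).

End Game.

(* Main.v *)
Require Import Defs.
From mathcomp Require Import all_boot all_order all_algebra.
From mathcomp Require Import ring lra zify.
Import Order.TTheory GRing.Theory Num.Theory.
Local Open Scope ring_scope.

Lemma sum_option (K : realFieldType) (T : finType) (F : option T -> K) :
  \sum_(o : option T) F o = F None + \sum_(x : T) F (Some x).
Proof.
rewrite (bigD1 None) //=; congr (_ + _).
rewrite (reindex_omap Some id) /=; first by apply: eq_bigl => x; rewrite eqxx.
by case.
Qed.

Lemma setmin_le (K : realFieldType) (T : finType) (X : {set T}) (f : T -> K) y :
  y \in X -> setmin X f <= f y.
Proof.
move=> Hy; rewrite /setmin; case: pickP => [x0 _|H]; last by rewrite H in Hy.
exact: bigmin_le_cond.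
Qed.

Lemma setmin_in (K : realFieldType) (T : finType) (X : {set T}) (f : T -> K) :
  X != set0 -> exists2 y, y \in X & setmin X f = f y.
Proof.
case/set0Pn => y0 Hy0; rewrite /setmin; case: pickP => [x0 Hx0|H]; last by rewrite H in Hy0.
elim/big_ind: _ => [|a b [ya Ha ->] [yb Hb ->]|y Hy]; first by exists x0.
  by case: (leP (f ya) (f yb)) => _; [exists ya|exists yb].
by exists y.
Qed.

Lemma setmin_diff (K : realFieldType) (T : finType) (X : {set T}) (f g : T -> K) e :
  X != set0 -> (forall x, x \in X -> `|f x - g x| <= e) ->
  `|setmin X f - setmin X g| <= e.
Proof.
move=> Hne H; rewrite ler_norml; apply/andP; split.
  case: (@setmin_in _ _ _ f Hne) => y Hy ->.
  apply: le_trans (_ : f y - g y <= _); first by have := H y Hy; rewrite ler_norml => /andP[].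
  by rewrite lerD2l lerN2 setmin_le.
case: (@setmin_in _ _ _ g Hne) => y Hy ->.
apply: le_trans (_ : f y - g y <= _); first by rewrite lerD2r setmin_le.
by have := H y Hy; rewrite ler_norml => /andP[].
Qed.

Section Proof.
Set Implicit Arguments.
Variables (K : realFieldType) (n : nat) (U V : finType).
Variables (A : 'I_n -> {set U}) (B : 'I_n -> {set V}).
Variables (p : 'I_n -> U -> V -> option 'I_n -> K) (nu : 'I_n -> V -> K).
Hypothesis Hv : valid_game A B p.
Hypothesis Hnu : policy2 B nu.

Definition q j u l := \sum_(v in B j) nu j v * p j u v (Some l).
Definition q0 j u := \sum_(v in B j) nu j v * p j u v None.

Lemma p_ge0 i u v o : u \in A i -> v \in B i -> 0 <= p i u v o.
Proof. by move=> Hu Hv'; case: Hv => _ [_ /(_ i u v Hu Hv') [->]]. Qed.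

Lemma p_sum i u v : u \in A i -> v \in B i ->
  p i u v None + \sum_l p i u v (Some l) = 1.
Proof. by move=> Hu Hv'; case: Hv => _ [_ /(_ i u v Hu Hv') [_]]; rewrite sum_option. Qed.

Lemma nu_ge0 j v : 0 <= nu j v.
Proof. by case: (Hnu j) => ->. Qed.

Lemma nu_sum j : \sum_(v in B j) nu j v = 1.
Proof. by case: (Hnu j) => _ [_ ->]. Qed.

Lemma q_ge0 j u l : u \in A j -> 0 <= q j u l.
Proof.
by move=> Hu; apply: sumr_ge0 => v Hv'; rewrite mulr_ge0 ?nu_ge0 ?p_ge0.
Qed.

Lemma q0_ge0 j u : u \in A j -> 0 <= q0 j u.
Proof.
by move=> Hu; apply: sumr_ge0 => v Hv'; rewrite mulr_ge0 ?nu_ge0 ?p_ge0.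
Qed.

Lemma q_sum j u : u \in A j -> q0 j u + \sum_l q j u l = 1.
Proof.
move=> Hu; rewrite /q0 /q exchange_big /= -big_split /= -[RHS](nu_sum j).
apply: eq_bigr => v Hv'; rewrite -mulr_sumr -mulrDr p_sum ?mulr1 //.
Qed.

Definition step (X : {set 'I_n}) : {set 'I_n} :=
  X :|: [set j | [forall (u | u \in A j), (0 < q0 j u) || [exists (l | l \in X), 0 < q j u l]]].

Lemma step_mono : {homo step : X Y / X \subset Y}.
Proof.
move=> X Y sXY; apply/subsetP => j; rewrite !inE => /orP[jX|/forall_inP H].
  by rewrite (subsetP sXY).
apply/orP; right; apply/forall_inP => u Hu; case/orP: (H u Hu) => [->//|].
case/exists_inP => l lX ql; apply/orP; right; apply/exists_inP; exists l => //.
exact: (subsetP sXY).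
Qed.

Lemma fix_all : proper2 A B p nu -> forall j, j \in fixset step.
Proof.
move=> Hp j0; apply/negPn/negP => Hj0.
set S := fixset step.
have HS : step S = S := fixsetK step_mono.
have Ane : forall j, A j != set0 by case: Hv.
case/set0Pn: (Ane j0) => u0 _.
pose good j u := (q0 j u <= 0) && [forall (l | l \in S), q j u l <= 0].
have bad : forall j, j \notin S -> exists2 u, u \in A j & good j u.
  move=> j; rewrite -{1}HS !inE negb_or => /andP[_ /forallPn [u]].
  rewrite negb_imply => /andP[Hu]; rewrite negb_or -leNgt => /andP[H1 /exists_inPn H2].
  exists u => //; rewrite /good H1 /=; apply/forall_inP => l Hl; rewrite leNgt H2 //.
pose ch j := if [pick u in A j | good j u] is Some u then u
             else if [pick u in A j] is Some u then u else u0.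
have ch_in : forall j, ch j \in A j.
  move=> j; rewrite /ch; case: pickP => [u /andP[]//|_].
  case: pickP => [u //|H]; case/set0Pn: (Ane j) => u1 Hu1; by rewrite H in Hu1.
have ch_good : forall j, j \notin S -> good j (ch j).
  move=> j /bad [u Hu Hg]; rewrite /ch; case: pickP => [u' /andP[]//|H].
  by move: (H u); rewrite Hu Hg.
pose mu (j : 'I_n) (u : U) : K := (u == ch j)%:R.
have Hmu : policy1 A mu.
  move=> i; split; first by move=> u; rewrite /mu ler0n.
  split; first by move=> u Hu; rewrite /mu; case: eqP => // E; rewrite E ch_in in Hu.
  rewrite (bigD1 (ch i)) ?ch_in //= /mu eqxx big1 ?addr0 // => u /andP[_ /negPf ->] //.
have Htr : forall j l, trans A B p mu nu j l = q j (ch j) l.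
  move=> j l; rewrite /trans (bigD1 (ch j)) ?ch_in //= [X in _ + X]big1 ?addr0.
    by rewrite /q; apply: eq_bigr => v _; rewrite /mu eqxx mul1r.
  move=> u /andP[_ /negPf Hu]; apply: big1 => v _; by rewrite /mu Hu !mul0r.
have NT : forall k j, j \notin S -> not_terminated A B p mu nu k j = 1.
  elim=> [//|k IH] j Hj /=.
  under eq_bigr => l _ do rewrite Htr.
  have /andP[H0 /forall_inP Hl] := ch_good j Hj.
  have Hq := @q_sum j (ch j) (ch_in j).
  rewrite (@le_anti _ _ (q0 j (ch j)) 0) ?H0 ?q0_ge0 ?ch_in // add0r in Hq.
  rewrite -[RHS]Hq. apply: eq_bigr => l _.
  case: (boolP (l \in S)) => HlS; last by rewrite IH ?mulr1.
  by rewrite (@le_anti _ _ (q j (ch j) l) 0) ?Hl ?q_ge0 ?ch_in // mul0r.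
case: (Hp mu Hmu j0 1 ltr01) => N /(_ N (leqnn N)).
by rewrite NT // ltxx.
Qed.

Hypothesis Hp : proper2 A B p nu.

Definition L j := fix_order step j.

Lemma L_gt0 j : (0 < L j)%N.
Proof. by rewrite /L fix_order_gt0 fix_all. Qed.

Lemma L_le j : (L j <= n)%N.
Proof. by have := fix_order_le_max step j; rewrite card_ord. Qed.

Lemma L_desc j u : u \in A j ->
  (0 < q0 j u) || [exists l, (L l < L j)%N && (0 < q j u l)].
Proof.
move=> Hu.
have Hin := in_iter_fix_orderE step j; rewrite fix_all // in Hin.
have Hnot : j \notin iter (L j).-1 step set0.
  by apply: (notin_iter step_mono); rewrite /L ltn_predL L_gt0.
move: Hin; rewrite /= -[fix_order step j](prednK (L_gt0 j)) /= {1}/step !inE.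
case/orP => [H|/forall_inP /(_ u Hu) /orP[->//|/exists_inP [l Hl Hq]]].
  by rewrite H in Hnot.
apply/orP; right; apply/existsP; exists l; rewrite Hq andbT.
have := fix_order_small step_mono Hl; rewrite -/(L l) => H.
by apply: leq_ltn_trans H _; rewrite ltn_predL L_gt0.
Qed.


Definition m j u := q0 j u + \sum_(l | (L l < L j)%N) q j u l.

Lemma m_pos j u : u \in A j -> 0 < m j u.
Proof.
move=> Hu; have Hs : 0 <= \sum_(l | (L l < L j)%N) q j u l.
  by apply: sumr_ge0 => l _; rewrite q_ge0.
case/orP: (L_desc Hu) => [H|/existsP [l /andP[Hl Hq]]].
  by rewrite /m ltr_wpDr.
rewrite /m (bigD1 l) //= ltr_wpDl ?q0_ge0 // ltr_wpDr //.
by apply: sumr_ge0 => l' _; rewrite q_ge0.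
Qed.

Definition delta := \big[Num.min/1]_j \big[Num.min/1]_(u in A j) m j u.

Lemma delta_pos : 0 < delta.
Proof.
apply: lt_bigmin => // j _; apply: lt_bigmin => // u Hu; exact: m_pos.
Qed.

Lemma delta_le1 : delta <= 1.
Proof. exact: bigmin_le_id. Qed.

Lemma delta_le_m j u : u \in A j -> delta <= m j u.
Proof.
move=> Hu; rewrite /delta; apply: (bigmin_inf j) => //.
exact: bigmin_le_cond.
Qed.

Definition D : K := 2 / delta.

Lemma D_ge1 : 1 <= D.
Proof.
rewrite /D ler_pdivlMr ?delta_pos // mul1r.
by apply: le_trans delta_le1 _; rewrite ler1n.
Qed.

Lemma delta_D : delta * D = 2.
Proof. by rewrite /D mulrC divfK // gt_eqF // delta_pos. Qed.

Definition e j := D ^+ (n - L j).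
Definition w j := D ^+ n - e j.

Lemma e_ge1 j : 1 <= e j.
Proof. exact: exprn_ege1 D_ge1. Qed.

Lemma e_le j : e j <= D ^+ n.
Proof. by apply: ler_weXn2l; [exact: D_ge1|exact: leq_subr]. Qed.

Lemma w_ge0 j : 0 <= w j.
Proof. by rewrite /w subr_ge0 e_le. Qed.

Lemma w_le j : w j <= D ^+ n.
Proof. by rewrite /w lerBlDr lerDl (le_trans ler01 (e_ge1 j)). Qed.

Lemma key j u : u \in A j -> 1 + \sum_l q j u l * w l <= w j.
Proof.
move=> Hu.
have Hq := q_sum Hu.
have E : \sum_l q j u l * w l = (1 - q0 j u) * D ^+ n - \sum_l q j u l * e l.
  rewrite /w; under eq_bigr => l _ do rewrite mulrBr.
  by rewrite sumrB -mulr_suml -Hq [q0 j u + _]addrC addrK.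
rewrite E.
suff H : 1 + e j <= q0 j u * D ^+ n + \sum_l q j u l * e l.
  rewrite /w; move: H; rewrite mulrBl mul1r; set S := \sum_l _; set Z := q0 j u * _.
  move=> H; lra.
have Dej : forall k, (L k < L j)%N -> D * e j <= e k.
  move=> k Hk; rewrite /e -exprS; apply: ler_weXn2l; first exact: D_ge1.
  have := L_le j; have := L_gt0 j; lia.
have S1 : \sum_(l | (L l < L j)%N) q j u l * (D * e j) <= \sum_l q j u l * e l.
  rewrite [X in _ <= X](bigID (fun l => (L l < L j)%N)) /=.
  apply: le_trans (_ : \sum_(l | (L l < L j)%N) q j u l * e l <= _).
    by apply: ler_sum => l Hl; rewrite ler_wpM2l ?q_ge0 ?Dej.
  rewrite lerDl; apply: sumr_ge0 => l _.
  by rewrite mulr_ge0 ?q_ge0 // (le_trans ler01 (e_ge1 l)).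
have S0 : q0 j u * (D * e j) <= q0 j u * D ^+ n.
  rewrite ler_wpM2l ?q0_ge0 // /e -exprS; apply: ler_weXn2l; first exact: D_ge1.
  have := L_le j; have := L_gt0 j; lia.
have M : m j u * (D * e j) = q0 j u * (D * e j) + \sum_(l | (L l < L j)%N) q j u l * (D * e j).
  by rewrite /m mulrDl; congr (_ + _); rewrite mulr_suml.
have Hm : delta * (D * e j) <= m j u * (D * e j).
  rewrite ler_wpM2r ?delta_le_m // mulr_ge0 //; first exact: le_trans ler01 D_ge1.
  exact: le_trans ler01 (e_ge1 j).
rewrite [delta * _]mulrA delta_D in Hm.
have := e_ge1 j; lra.
Qed.


Definition xi i u v := 1 + \sum_j p i u v (Some j) * w j.

Lemma xi_ge1 i u v : u \in A i -> v \in B i -> 1 <= xi i u v.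
Proof.
move=> Hu Hv'; rewrite /xi lerDl; apply: sumr_ge0 => j _.
by rewrite mulr_ge0 ?p_ge0 ?w_ge0.
Qed.

Lemma xi_le i u v : u \in A i -> v \in B i -> xi i u v <= 1 + D ^+ n.
Proof.
move=> Hu Hv'; rewrite /xi lerD2l.
apply: le_trans (_ : \sum_j p i u v (Some j) * D ^+ n <= _).
  by apply: ler_sum => j _; rewrite ler_wpM2l ?p_ge0 ?w_le.
rewrite -mulr_suml ler_piMl //; first by apply: exprn_ge0; exact: le_trans ler01 D_ge1.
have := p_sum Hu Hv'; have := p_ge0 None Hu Hv'; lra.
Qed.

Lemma inner_bound (Z : 'I_n -> U -> V -> K) d j ut :
  0 <= d -> ut \in A j ->
  (forall v, v \in B j -> `|Z j ut v| <= d * xi j ut v) ->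
  `|\sum_(vt in B j) nu j vt * Z j ut vt| <= d * w j.
Proof.
move=> d0 Hu HZ; apply: le_trans (ler_norm_sum _ _ _) _.
apply: le_trans (_ : \sum_(vt in B j) nu j vt * (d * xi j ut vt) <= _).
  apply: ler_sum => v Hv'; rewrite normrM ger0_norm ?nu_ge0 //.
  by rewrite ler_wpM2l ?nu_ge0 ?HZ.
have E : \sum_(vt in B j) nu j vt * (d * xi j ut vt) =
         d * (1 + \sum_l q j ut l * w l).
  under eq_bigr => v _ do rewrite /xi mulrCA mulrDr mulr1 mulr_sumr.
  rewrite -mulr_sumr big_split /= nu_sum; congr (d * (1 + _)).
  rewrite exchange_big /=; apply: eq_bigr => l _; rewrite /q mulr_suml.
  by apply: eq_bigr => v _; rewrite mulrA.
by rewrite E ler_wpM2l ?key.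
Qed.


Lemma main (g : 'I_n -> U -> V -> K) :
  exists (xi : 'I_n -> U -> V -> K) (beta : K),
    positive_on_R A B xi /\ 0 <= beta /\ beta < 1 /\
    forall Q Q' : 'I_n -> U -> V -> K,
      wnorm A B xi (fun i u v => Fmap A B p g nu Q i u v - Fmap A B p g nu Q' i u v)
      <= beta * wnorm A B xi (fun i u v => Q i u v - Q' i u v).
Proof.
have X1 : 1 <= 1 + D ^+ n.
  by rewrite lerDl; apply: exprn_ge0; exact: le_trans ler01 D_ge1.
have X0 : 0 < 1 + D ^+ n by apply: lt_le_trans X1.
have xi0 : forall i u v, u \in A i -> v \in B i -> 0 < xi i u v.
  by move=> i u v Hu Hv'; apply: lt_le_trans ltr01 (xi_ge1 Hu Hv').
exists xi, (1 - (1 + D ^+ n)^-1); split; first by move=> i u v; exact: xi0.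
split; first by rewrite subr_ge0 invf_le1.
split; first by rewrite ltrBlDr ltrDl invr_gt0.
move=> Q Q'.
set d := wnorm A B xi (fun i u v => Q i u v - Q' i u v).
have d0 : 0 <= d by apply: bigmax_ge_id.
have HQ : forall i u v, u \in A i -> v \in B i ->
    `|Q i u v - Q' i u v| <= d * xi i u v.
  move=> i u v Hu Hv'; rewrite -ler_pdivrMr ?xi0 //.
  apply: le_trans (le_bigmax _ _ i).
  apply: le_trans (le_bigmax_cond _ _ Hu).
  exact: (le_bigmax_cond _ (fun v => `|Q i u v - Q' i u v| / xi i u v) Hv').
apply: bigmax_le; first by rewrite mulr_ge0 // subr_ge0 invf_le1.
move=> i _; apply: bigmax_le; first by rewrite mulr_ge0 // subr_ge0 invf_le1.
move=> u Hu; apply: bigmax_le; first by rewrite mulr_ge0 // subr_ge0 invf_le1.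
move=> v Hv'; rewrite ler_pdivrMr ?xi0 //.
have Hne : forall j, A j != set0 by case: Hv.
have HF : `|Fmap A B p g nu Q i u v - Fmap A B p g nu Q' i u v| <= d * (xi i u v - 1).
  rewrite /Fmap opprD addrACA subrr add0r -sumrB.
  apply: le_trans (ler_norm_sum _ _ _) _.
  rewrite /xi [1 + _]addrC addrK mulr_sumr; apply: ler_sum => j _.
  rewrite -mulrBr normrM ger0_norm ?p_ge0 // mulrCA ler_wpM2l ?p_ge0 //.
  apply: setmin_diff => // ut Hut; rewrite -sumrB.
  under eq_bigr => vt _ do rewrite -mulrBr.
  by apply: (inner_bound (fun j ut vt => Q j ut vt - Q' j ut vt)) => // vt Hvt; apply: HQ.
apply: le_trans HF _.
have Ht : xi i u v / (1 + D ^+ n) <= 1 by rewrite ler_pdivrMr // mul1r xi_le.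
have Hdt : d * (xi i u v / (1 + D ^+ n)) <= d by rewrite ler_piMr.
have E : (1 - (1 + D ^+ n)^-1) * d * xi i u v =
         d * xi i u v - d * (xi i u v / (1 + D ^+ n)) by ring.
rewrite E mulrBr mulr1; lra.
Qed.

End Proof.

Theorem lemma4p8 (K : realFieldType) (n : nat) (U V : finType)
  (A : 'I_n -> {set U}) (B : 'I_n -> {set V})
  (p : 'I_n -> U -> V -> option 'I_n -> K) (g : 'I_n -> U -> V -> K)
  (nubar : 'I_n -> V -> K) :
  valid_game A B p ->
  policy2 B nubar ->
  proper2 A B p nubar ->
  exists (xi : 'I_n -> U -> V -> K) (beta : K),
    positive_on_R A B xi /\ 0 <= beta /\ beta < 1 /\
    forall Q Q' : 'I_n -> U -> V -> K,
      wnorm A B xi (fun i u v => Fmap A B p g nubar Q i u v - Fmap A B p g nubar Q' i u v)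
      <= beta * wnorm A B xi (fun i u v => Q i u v - Q' i u v).
Proof. by move=> Hv Hnu Hp; exact: main. Qed.
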